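(* Let $k\ge2$ and $n'\ge1$. For every proper coloring of $G^*$ using at most $2k-2$ colors, either every gadget $A_1,\dots,A_{n'}$ is row-colorful or every gadget $A_1,\dots,A_{n'}$ is column-colorful (with respect to the restriction of the coloring to the gadget).
   Context: For integers $k\ge2$ and $n'\ge1$, the graph $G^*$ has node set $[n']\times[k]\times[k]$, and two nodes $(\ell,i,j)$ and $(\ell',i',j')$ are adjacent iff $|\ell-\ell'|\le 1$, $i\ne i'$ and $j\ne j'$. For $\ell\in[n']$, the gadget $A_\ell$ is the subgraph induced by $\{\ell\}\times[k]\times[k]$; its $i$-th row is $\{(\ell,i,j):j\in[k]\}$ and its $j$-th column is $\{(\ell,i,j):i\in[k]\}$. Given a proper coloring, a row (resp. column) of a gadget is colorful if its $k$ nodes receive pairwise distinct colors; a gadget is row-colorful if it has a colorful row and column-colorful if it has a colorful column. *)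

(* Defs.v *)
From mathcomp Require Import all_boot.
Set Implicit Arguments. Unset Strict Implicit. Unset Printing Implicit Defensive.

Definition node (n' k : nat) : finType := ('I_n' * 'I_k * 'I_k)%type.

Definition gadj (n' k : nat) (x y : node n' k) : bool :=
  let: (l, i, j) := x in let: (l', i', j') := y in
  [&& (l <= l'.+1), (l' <= l.+1), i != i' & j != j'].

Definition proper_coloring (n' k : nat) (C : Type) (c : node n' k -> C) : Prop :=
  forall x y : node n' k, gadj x y -> c x <> c y.

Definition row_colorful_at (n' k : nat) (C : eqType) (c : node n' k -> C)
  (l : 'I_n') (i : 'I_k) : Prop :=
  forall j j' : 'I_k, j != j' -> c (l, i, j) <> c (l, i, j').

Definition col_colorful_at (n' k : nat) (C : eqType) (c : node n' k -> C)
  (l : 'I_n') (j : 'I_k) : Prop :=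
  forall i i' : 'I_k, i != i' -> c (l, i, j) <> c (l, i', j).

Definition row_colorful (n' k : nat) (C : eqType) (c : node n' k -> C) (l : 'I_n') : Prop :=
  exists i : 'I_k, row_colorful_at c l i.

Definition column_colorful (n' k : nat) (C : eqType) (c : node n' k -> C) (l : 'I_n') : Prop :=
  exists j : 'I_k, col_colorful_at c l j.

(* Main.v *)
Require Import Defs.
From mathcomp Require Import all_boot.
From mathcomp Require Import zify.

Set Implicit Arguments. Unset Strict Implicit. Unset Printing Implicit Defensive.

Definition rowb (n' k m : nat) (c : node n' k -> 'I_m) (l : 'I_n') : bool :=
  [exists i : 'I_k, [forall j : 'I_k, forall j' : 'I_k,
     (j != j') ==> (c (l, i, j) != c (l, i, j'))]].

Definition colb (n' k m : nat) (c : node n' k -> 'I_m) (l : 'I_n') : bool :=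
  [exists j : 'I_k, [forall i : 'I_k, forall i' : 'I_k,
     (i != i') ==> (c (l, i, j) != c (l, i', j))]].

Lemma rowbP n' k m (c : node n' k -> 'I_m) l : reflect (row_colorful c l) (rowb c l).
Proof.
apply: (iffP existsP) => [[i /forallP H]|[i H]]; exists i.
- move=> j j' ne; have /forallP/(_ j')/implyP/(_ ne)/eqP := H j; done.
- apply/forallP=> j; apply/forallP=> j'; apply/implyP=> ne; apply/eqP; exact: H.
Qed.

Lemma colbP n' k m (c : node n' k -> 'I_m) l : reflect (column_colorful c l) (colb c l).
Proof.
apply: (iffP existsP) => [[i /forallP H]|[i H]]; exists i.
- move=> j j' ne; have /forallP/(_ j')/implyP/(_ ne)/eqP := H j; done.
- apply/forallP=> j; apply/forallP=> j'; apply/implyP=> ne; apply/eqP; exact: H.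
Qed.

Lemma notrow_ex n' k m (c : node n' k -> 'I_m) l : ~~ rowb c l ->
  forall i, exists p : 'I_k * 'I_k, (p.1 != p.2) && (c (l, i, p.1) == c (l, i, p.2)).
Proof.
move=> H i; move: H; rewrite negb_exists => /forallP/(_ i).
rewrite negb_forall => /existsP[j]; rewrite negb_forall => /existsP[j'].
by rewrite negb_imply negbK => /andP[ne e]; exists (j, j'); rewrite ne e.
Qed.

Lemma notcol_ex n' k m (c : node n' k -> 'I_m) l : ~~ colb c l ->
  forall j, exists p : 'I_k * 'I_k, (p.1 != p.2) && (c (l, p.1, j) == c (l, p.2, j)).
Proof.
move=> H i; move: H; rewrite negb_exists => /forallP/(_ i).
rewrite negb_forall => /existsP[j]; rewrite negb_forall => /existsP[j'].
by rewrite negb_imply negbK => /andP[ne e]; exists (j, j'); rewrite ne e.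
Qed.

Lemma same_rc n' k m (c : node n' k -> 'I_m) (l l' : 'I_n') i j i' j' :
  proper_coloring c -> l <= l'.+1 -> l' <= l.+1 ->
  c (l, i, j) = c (l', i', j') -> (i == i') || (j == j').
Proof.
move=> H h1 h2 e; apply: contraT; rewrite negb_or => /andP[a b].
exfalso; apply: (H (l, i, j) (l', i', j')) => //; rewrite /gadj.
by apply/and4P.
Qed.

Lemma R_inj n' k m (c : node n' k -> 'I_m) (l : 'I_n') (f : 'I_k -> 'I_k * 'I_k) :
  proper_coloring c ->
  (forall i, (f i).1 != (f i).2 /\ c (l, i, (f i).1) = c (l, i, (f i).2)) ->
  injective (fun i => c (l, i, (f i).1)).
Proof.
move=> H hf i i' e; apply/eqP; apply: contraT => ne.
have [n1 e1] := hf i; have [n2 e2] := hf i'.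
have := same_rc H (leqnSn l) (leqnSn l) e; rewrite (negbTE ne) /= => /eqP a1.
have e' : c (l, i, (f i).2) = c (l, i', (f i').1) by rewrite -e1.
have := same_rc H (leqnSn l) (leqnSn l) e'; rewrite (negbTE ne) /= => /eqP a2.
by move: n1; rewrite a1 a2 eqxx.
Qed.

Lemma gadget n' k (c : node n' k -> 'I_(2 * k - 2)) (l : 'I_n') :
  2 <= k -> proper_coloring c -> ~~ rowb c l -> ~~ colb c l -> False.
Proof.
move=> hk H hr hc.
have [f hf] := fin_all_exists (notrow_ex hr).
have [g hg] := fin_all_exists (notcol_ex hc).
have hf' : forall i, (f i).1 != (f i).2 /\ c (l, i, (f i).1) = c (l, i, (f i).2).
  by move=> i; have /andP[a /eqP b] := hf i.
have hg' : forall j, (g j).1 != (g j).2 /\ c (l, (g j).1, j) = c (l, (g j).2, j).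
  by move=> j; have /andP[a /eqP b] := hg j.
pose A := [set c (l, i, (f i).1) | i : 'I_k].
pose B := [set c (l, (g j).1, j) | j : 'I_k].
have cA : #|A| = k by rewrite card_imset ?cardsT ?card_ord //; exact: R_inj.
have cB : #|B| = k.
  rewrite card_imset ?cardsT ?card_ord // => j j' e; apply/eqP; apply: contraT => ne.
  have [n1 e1] := hg' j; have [n2 e2] := hg' j'.
  have := same_rc H (leqnSn l) (leqnSn l) e; rewrite (negbTE ne) orbF => /eqP a1.
  have e' : c (l, (g j).2, j) = c (l, (g j').1, j') by rewrite -e1.
  have := same_rc H (leqnSn l) (leqnSn l) e'; rewrite (negbTE ne) orbF => /eqP a2.
  by move: n1; rewrite a1 a2 eqxx.
have cI : A :&: B = set0.
  apply/setP => x; rewrite in_set0 inE; apply/negbTE/negP => /andP[/imsetP[i _ ->]].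
  move=> /imsetP[j _ e].
  have [n1 e1] := hf' i; have [n2 e2] := hg' j.
  have key : forall b, c (l, i, (f i).1) = c (l, b, j) -> b != i -> False.
    move=> b eb nb.
    have := same_rc H (leqnSn l) (leqnSn l) eb; rewrite eq_sym (negbTE nb) /= => /eqP a1.
    have eb' : c (l, i, (f i).2) = c (l, b, j) by rewrite -e1.
    have := same_rc H (leqnSn l) (leqnSn l) eb'; rewrite eq_sym (negbTE nb) /= => /eqP a2.
    by move: n1; rewrite a1 a2 eqxx.
  case: (eqVneq (g j).1 i) => [h1|h1]; last exact: key _ e h1.
  apply: (key (g j).2); first by rewrite -e2.
  by rewrite -h1 eq_sym.
have := cardsUI A B; rewrite cI cards0 cA cB addn0 => hU.
have := max_card (A :|: B); rewrite card_ord hU; lia.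
Qed.

Lemma prop_row n' k (c : node n' k -> 'I_(2 * k - 2)) (l l' : 'I_n') :
  2 <= k -> proper_coloring c -> l <= l'.+1 -> l' <= l.+1 ->
  ~~ rowb c l -> rowb c l' -> False.
Proof.
move=> hk H h1 h2 hr /rowbP[r hr'].
have [f hf] := fin_all_exists (notrow_ex hr).
have hf' : forall i, (f i).1 != (f i).2 /\ c (l, i, (f i).1) = c (l, i, (f i).2).
  by move=> i; have /andP[a /eqP b] := hf i.
pose A := [set c (l, i, (f i).1) | i in [set~ r]].
pose B := [set c (l', r, j) | j : 'I_k].
have cA : #|A| = k.-1 by rewrite card_imset ?cardsC1 ?card_ord //; exact: R_inj.
have cB : #|B| = k.
  rewrite card_imset ?cardsT ?card_ord // => j j' e; apply/eqP; apply: contraT => ne.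
  by case: (hr' j j' ne e).
have cI : A :&: B = set0.
  apply/setP => x; rewrite in_set0 inE; apply/negbTE/negP => /andP[/imsetP[i hi ->]].
  move=> /imsetP[j _ e].
  rewrite !inE in hi.
  have [n1 e1] := hf' i.
  have := same_rc H h1 h2 e; rewrite (negbTE hi) /= => /eqP a1.
  have e' : c (l, i, (f i).2) = c (l', r, j) by rewrite -e1.
  have := same_rc H h1 h2 e'; rewrite (negbTE hi) /= => /eqP a2.
  by move: n1; rewrite a1 a2 eqxx.
have := cardsUI A B; rewrite cI cards0 cA cB addn0 => hU.
have := max_card (A :|: B); rewrite card_ord hU; lia.
Qed.

Theorem mainTheorem15 (k n' : nat) (hk : 2 <= k) (hn : 1 <= n')
  (c : node n' k -> 'I_(2 * k - 2)) :
  proper_coloring c ->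
  (forall l : 'I_n', row_colorful c l) \/ (forall l : 'I_n', column_colorful c l).
Proof.
move=> H.
have step : forall l l' : 'I_n', l' = l.+1 :> nat -> rowb c l = rowb c l'.
  move=> l l' e.
  case: (boolP (rowb c l)) => a; case: (boolP (rowb c l')) => b //.
  - exfalso; apply: (prop_row hk H _ _ b a); lia.
  - exfalso; apply: (prop_row hk H _ _ a b); lia.
have const : forall l : 'I_n', rowb c l = rowb c (Ordinal hn).
  case=> m hm; elim: m hm => [|m IH] hm; first by congr rowb; apply: val_inj.
  have hm' : m < n' by lia.
  rewrite -(IH hm'); symmetry; apply: step => //.
case: (boolP (rowb c (Ordinal hn))) => h.
- by left => l; apply/rowbP; rewrite const.
- right => l; apply/colbP; apply: contraT => hc.
  exfalso; apply: (gadget hk H (l := l)) => //; by rewrite const.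
Qed.
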